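(* Let $n\ge 1$, let $M\in \mathrm{Sp}(2n,\mathbb{F}_2)$ be the symplectic matrix of an $n$-qubit Clifford operator $U$, and let $0\le w\le n$. Then there exist vectors $u_1,\dots,u_{4w}\in\mathbb{F}_2^{2n}$ such that the matrix $$M' := M\, S_{u_1} S_{u_2}\cdots S_{u_{4w}}$$ (i.e. first apply $E_{u_1}$ to every row of $M$, then $E_{u_2}$, and so on) satisfies $e_iM'=e_i$ and $f_iM'=f_i$ for all $1\le i\le w$, and $bM'\in\mathrm{span}\{e_j,f_j : w<j\le n\}$ for every $b\in\{e_j,f_j: w<j\le n\}$. Equivalently, the Clifford operator $R_{\pi/4}(P_{u_{4w}})\cdots R_{\pi/4}(P_{u_1})$ composed with $U$ (in the order corresponding to $M'$) has, up to Pauli operators and phases, support only on the last $n-w$ qubits; i.e. $4w$ Pauli $\pi/4$ rotations suffice to clean a Clifford frame off $w$ qubits.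
   Context: Paulis and Cliffords are represented in the binary symplectic formalism. An $n$-qubit Pauli operator is identified (up to phase) with a row vector $v\in\mathbb{F}_2^{2n}$ via $P_v=\prod_{i=1}^n X_i^{v_i}Z_i^{v_{n+i}}$. The symplectic form is $\langle u,v\rangle=uJv^T$ with $J=\begin{bmatrix}0&I_n\\ I_n&0\end{bmatrix}$; $P_u,P_v$ commute iff $\langle u,v\rangle=0$. Let $e_1,\dots,e_{2n}$ be the standard basis of $\mathbb{F}_2^{2n}$ and $f_k:=e_{n+k}$ ($e_k$ corresponds to $X_k$, $f_k$ to $Z_k$). A Clifford $U$ is represented (ignoring Pauli corrections and phases) by a matrix $M_U$ with $M_UJM_U^T=J$, acting by $v\mapsto vM_U$ (conjugation $P\mapsto UPU^\dagger$); its $i$-th row is the image of the $i$-th basis vector. The Pauli $\pi/4$ rotation $R_{\pi/4}(P_u)$ maps $P\mapsto PP_u$ if $P$ anticommutes with $P_u$ and fixes $P$ otherwise; in symplectic form it acts as the transvection $E_u(v)=v+\langle u,v\rangle u$, whose matrix (row-vector convention $v\mapsto vS_u$) is denoted $S_u$. Each such rotation can be implemented by one logical Pauli product measurement with an ancilla. *)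

(* Defs.v *)
From mathcomp Require Import all_boot all_algebra.
Set Implicit Arguments. Unset Strict Implicit. Unset Printing Implicit Defensive.
Import GRing.Theory.
Local Open Scope ring_scope.

(* Coordinates of F_2^{2n} are indexed by 'I_(n + n): lshift n i is the
   X-coordinate of qubit i (vector e_{i+1}), rshift n i the Z-coordinate
   (vector f_{i+1}).  Qubits are 0-indexed here. *)

Definition F2 := 'F_2.

Definition Jmx (n : nat) : 'M[F2]_(n + n) := block_mx 0 1%:M 1%:M 0.

Definition symp (n : nat) (u v : 'rV[F2]_(n + n)) : F2 :=
  (u *m Jmx n *m v^T) 0 0.

Definition is_symp_mx (n : nat) (M : 'M[F2]_(n + n)) : Prop :=
  M *m Jmx n *m M^T = Jmx n.

Definition evec (n : nat) (i : 'I_n) : 'rV[F2]_(n + n) := delta_mx 0 (lshift n i).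
Definition fvec (n : nat) (i : 'I_n) : 'rV[F2]_(n + n) := delta_mx 0 (rshift n i).

Definition transvection (n : nat) (u v : 'rV[F2]_(n + n)) : 'rV[F2]_(n + n) :=
  v + symp u v *: u.

(* its matrix S_u in the row-vector convention: the k-th row is E_u of the
   k-th standard basis vector, so that v *m S_u = E_u v *)
Definition Smx (n : nat) (u : 'rV[F2]_(n + n)) : 'M[F2]_(n + n) :=
  \matrix_(k < n + n) transvection u (delta_mx 0 k).

Definition apply_rots (n : nat) (M : 'M[F2]_(n + n)) (us : seq 'rV[F2]_(n + n))
  : 'M[F2]_(n + n) := foldl (fun A u => A *m Smx u) M us.

(* span{e_j, f_j : w <= j < n} (0-indexed), as a matrix whose rows span it *)
Definition tail_span (n w : nat) : 'M[F2]_(n + n) :=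
  \matrix_(k < n + n)
    (if (w <= (if (k < n)%N then (k : nat) else (k - n)%N))%N then delta_mx 0 k
     else (0 : 'rV[F2]_(n + n))).

(* Main.v *)
Require Import Defs.
From mathcomp Require Import all_boot all_algebra.
Import GRing.Theory.
Local Open Scope ring_scope.

Lemma F2_2 (a : F2) : a + a = 0.
Proof. rewrite -mulr2n -mulr_natr. have -> : (2%:R : F2) = 0 by apply/eqP. by rewrite mulr0. Qed.
Lemma F2_cases (a : F2) : a = 0 \/ a = 1.
Proof. case: a => [[|[|m]] H]; [left|right|]; try by apply/val_inj. by []. Qed.
Lemma addvv m (a : 'rV[F2]_m) : a + a = 0.
Proof. by apply/rowP => k; rewrite !mxE F2_2. Qed.

Set Implicit Arguments.
Section S.
Variable n : nat.
Implicit Types (a b c u v w x y z : 'rV[F2]_(n + n)).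

Lemma trJ : (Jmx n)^T = Jmx n.
Proof. by rewrite /Jmx tr_block_mx !trmx0 trmx1. Qed.

Lemma sympC u v : symp u v = symp v u.
Proof.
have h (A : 'M[F2]_1) : A 0 0 = A^T 0 0 by rewrite mxE.
by rewrite /symp h !trmx_mul trmxK trJ mulmxA.
Qed.
Lemma sympDl u v w : symp (u + v) w = symp u w + symp v w.
Proof. by rewrite /symp !mulmxDl mxE. Qed.
Lemma sympZl (a : F2) u w : symp (a *: u) w = a * symp u w.
Proof. by rewrite /symp -!scalemxAl mxE. Qed.
Lemma sympDr u v w : symp w (u + v) = symp w u + symp w v.
Proof. by rewrite !(sympC w) sympDl. Qed.
Lemma symp0l v : symp 0 v = 0.
Proof. by rewrite -(scale0r 0) sympZl mul0r. Qed.

Lemma xJ x : x *m Jmx n = row_mx (rsubmx x) (lsubmx x).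
Proof.
rewrite -{1}(hsubmxK x) /Jmx mul_row_block !mulmx0 !mulmx1 add0r addr0 //.
Qed.

Lemma symp_delta x k : symp x (delta_mx 0 k) = (x *m Jmx n) 0 k.
Proof. by rewrite /symp trmx_delta -colE mxE. Qed.

Lemma symp_e x (i : 'I_n) : symp x (evec i) = x 0 (rshift n i).
Proof. by rewrite symp_delta xJ row_mxEl mxE. Qed.
Lemma symp_f x (i : 'I_n) : symp x (fvec i) = x 0 (lshift n i).
Proof. by rewrite symp_delta xJ row_mxEr mxE. Qed.

Lemma symp_xx x : symp x x = 0.
Proof.
rewrite /symp xJ -{3}(hsubmxK x) tr_row_mx mul_row_col mxE.
have h (A : 'M[F2]_1) : A 0 0 = A^T 0 0 by rewrite mxE.
rewrite [X in _ + X]h trmx_mul trmxK.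
exact: F2_2.
Qed.

Lemma sEE (a b : 'I_n) : symp (evec a) (evec b) = 0.
Proof. by rewrite symp_e mxE eq_sym eq_lrshift andbF. Qed.
Lemma sFF (a b : 'I_n) : symp (fvec a) (fvec b) = 0.
Proof. by rewrite symp_f /fvec mxE eq_lrshift andbF. Qed.
Lemma sEF (a b : 'I_n) : symp (evec a) (fvec b) = (a == b)%:R.
Proof. by rewrite symp_f mxE eq_shift eq_sym. Qed.
Lemma sFE (a b : 'I_n) : symp (fvec a) (evec b) = (a == b)%:R.
Proof. by rewrite symp_e /fvec mxE eq_shift eq_sym. Qed.

Lemma mul11 x u : x *m Jmx n *m u^T *m u = symp x u *: u.
Proof. by rewrite {1}[x *m _ *m _]mx11_scalar mul_scalar_mx. Qed.

Lemma Smx_E u : Smx u = 1%:M + Jmx n *m u^T *m u.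
Proof.
apply/row_matrixP => k; rewrite rowK /transvection rowE mulmxDr mulmx1 !mulmxA mul11.
by rewrite sympC.
Qed.

Lemma vmulS v u : v *m Smx u = transvection u v.
Proof. by rewrite Smx_E mulmxDr mulmx1 !mulmxA mul11 /transvection sympC. Qed.

Lemma sympZr (a : F2) u w : symp w (a *: u) = a * symp w u.
Proof. by rewrite !(sympC w) sympZl. Qed.

Lemma symp_tv u a b : symp (transvection u a) (transvection u b) = symp a b.
Proof.
rewrite /transvection (sympC u a) (sympC u b).
set al := symp a u; set be := symp b u.
rewrite !sympDl !sympDr !sympZl !sympZr symp_xx mulr0 mulr0 addr0.
rewrite (sympC u b) -/al -/be -[RHS]addr0 -addrA (mulrC be); congr (_ + _); exact (F2_2 (al * be)).
Qed.

Lemma tv0 v : @transvection n 0 v = v.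
Proof. by rewrite /transvection scaler0 addr0. Qed.

Lemma tv_fix u c : symp u c = 0 -> transvection u c = c.
Proof. by move=> h; rewrite /transvection h scale0r addr0. Qed.

Lemma hop a b : symp a b = 1 -> transvection (a + b) a = b.
Proof.
move=> h; rewrite /transvection sympDl symp_xx add0r sympC h scale1r.
by rewrite addrA addvv add0r.
Qed.

Definition pres (A : 'M[F2]_(n + n)) := forall v w, symp (v *m A) (w *m A) = symp v w.
Definition fixd (A : 'M[F2]_(n + n)) (i : nat) := forall k : 'I_n, (k < i)%N ->
  evec k *m A = evec k /\ fvec k *m A = fvec k.
Definition orth (i : nat) v := forall k : 'I_n, (k < i)%N ->
  symp v (evec k) = 0 /\ symp v (fvec k) = 0.

Lemma pres_S A u : pres A -> pres (A *m Smx u).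
Proof. by move=> hA v w; rewrite !mulmxA !vmulS symp_tv. Qed.

Lemma fixd_S A u i : fixd A i -> orth i u -> fixd (A *m Smx u) i.
Proof.
move=> hA hu k hk; have [h1 h2] := hA k hk; have [o1 o2] := hu k hk.
by rewrite !mulmxA h1 h2 !vmulS !tv_fix.
Qed.

Lemma orthD i u v : orth i u -> orth i v -> orth i (u + v).
Proof.
move=> hu hv k hk; have [a1 a2] := hu k hk; have [b1 b2] := hv k hk.
by rewrite !sympDl a1 a2 b1 b2 addr0.
Qed.

Lemma orth_img A i v : pres A -> fixd A i -> orth i v -> orth i (v *m A).
Proof.
move=> pA fA hv k hk; have [h1 h2] := fA k hk; have [o1 o2] := hv k hk.
by rewrite -{1}h1 -{1}h2 !pA.
Qed.

Lemma orth_e (j : 'I_n) i : (i <= j)%N -> orth i (evec j).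
Proof.
move=> hij k hk; rewrite sEE sEF; split=> //.
have -> : (j == k) = false by apply/negbTE; rewrite neq_ltn (leq_trans hk hij) orbT.
by [].
Qed.
Lemma orth_f (j : 'I_n) i : (i <= j)%N -> orth i (fvec j).
Proof.
move=> hij k hk; rewrite sFF sFE; split=> //.
have -> : (j == k) = false by apply/negbTE; rewrite neq_ltn (leq_trans hk hij) orbT.
by [].
Qed.

Lemma estep A (i : 'I_n) : pres A -> fixd A i -> exists u1 u2,
  orth i u1 /\ orth i u2 /\ evec i *m (A *m Smx u1 *m Smx u2) = evec i.
Proof.
move=> pA fA.
have oe : orth i (evec i) := @orth_e i i (leqnn i).
have ofv : orth i (fvec i) := @orth_f i i (leqnn i).
have ox := @orth_img A i _ pA fA oe. have oy := @orth_img A i _ pA fA ofv.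
set e := evec i in oe ox *; set f := fvec i in ofv oy *.
set x := e *m A in ox *; set y := f *m A in oy *.
have hxy : symp x y = 1 by rewrite pA sEF eqxx.
have hef : symp e f = 1 by rewrite sEF eqxx.
have hfe : symp f e = 1 by rewrite sFE eqxx.
have key : forall z, orth i z -> symp x z = 1 -> symp z e = 1 -> exists u1 u2,
  orth i u1 /\ orth i u2 /\ e *m (A *m Smx u1 *m Smx u2) = e.
  move=> z oz h1 h2; exists (x + z), (z + e); split; first exact: orthD.
  split; first exact: orthD.
  by rewrite !mulmxA !vmulS -/x hop // hop.
have [h1|h1] := F2_cases (symp x e); last first.
  exists (x + e), 0; split; first exact: orthD.
  split; first by move=> k _; rewrite !symp0l.
  by rewrite !mulmxA !vmulS -/x hop // tv_fix // symp0l.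
have [h2|h2] := F2_cases (symp x f); last exact: (key f ofv h2 hfe).
have [h3|h3] := F2_cases (symp y e); last exact: (key y oy hxy h3).
apply: (key (y + f)); first exact: orthD.
  by rewrite sympDr hxy h2 addr0.
by rewrite sympDl h3 hfe add0r.
Qed.

Lemma fstep A (i : 'I_n) : pres A -> fixd A i -> evec i *m A = evec i -> exists u1 u2,
  orth i u1 /\ orth i u2 /\ symp u1 (evec i) = 0 /\ symp u2 (evec i) = 0 /\
  fvec i *m (A *m Smx u1 *m Smx u2) = fvec i.
Proof.
move=> pA fA hA.
have oe : orth i (evec i) := @orth_e i i (leqnn i).
have ofv : orth i (fvec i) := @orth_f i i (leqnn i).
have oy := @orth_img A i _ pA fA ofv.
set e := evec i in oe hA *; set f := fvec i in ofv oy *.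
set y := f *m A in oy *.
have hey : symp e y = 1 by rewrite -{1}hA pA sEF eqxx.
have hye : symp y e = 1 by rewrite sympC.
have hef : symp e f = 1 by rewrite sEF eqxx.
have hfe : symp f e = 1 by rewrite sFE eqxx.
have hee : symp e e = 0 by rewrite symp_xx.
have hff : symp f f = 0 by rewrite symp_xx.
have [h1|h1] := F2_cases (symp y f).
  exists (y + e + f), (e + f + f).
  split; first by apply: orthD => //; apply: orthD.
  split; first by apply: orthD => //; apply: orthD.
  split; first by rewrite !sympDl hye hee hfe addr0 F2_2.
  split; first by rewrite !sympDl hee hfe add0r F2_2.
  rewrite !mulmxA !vmulS -/y -[y + e + f]addrA hop; last by rewrite sympDr hye h1 addr0.
  by rewrite hop // sympDl hef hff addr0.
exists (y + f), 0.
split; first exact: orthD.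
split; first by move=> k _; rewrite !symp0l.
split; first by rewrite sympDl hye hfe F2_2.
split; first by rewrite symp0l.
by rewrite !mulmxA !vmulS -/y hop // tv_fix // symp0l.
Qed.

Lemma step A (i : 'I_n) : pres A -> fixd A i -> exists us, size us = 4%N /\
  pres (apply_rots A us) /\ fixd (apply_rots A us) i.+1.
Proof.
move=> pA fA.
have [u1 [u2 [o1 [o2 he]]]] := @estep A i pA fA.
set B := A *m Smx u1 *m Smx u2 in he.
have pB : pres B by apply: pres_S; apply: pres_S.
have fB : fixd B i by apply: fixd_S => //; apply: fixd_S.
have [u3 [u4 [o3 [o4 [s3 [s4 hf]]]]]] := @fstep B i pB fB he.
exists [:: u1; u2; u3; u4]; split => //.
have -> : apply_rots A [:: u1; u2; u3; u4] = B *m Smx u3 *m Smx u4 by [].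
split; first by apply: pres_S; apply: pres_S.
move=> k; rewrite ltnS leq_eqVlt => /orP [/eqP hk|hk].
  have -> : k = i by apply: val_inj.
  split => //.
  by rewrite (mulmxA (evec i)) (mulmxA (evec i) B) he !vmulS !tv_fix.
have : fixd (B *m Smx u3 *m Smx u4) i by apply: fixd_S => //; apply: fixd_S.
by move/(_ k hk).
Qed.

Lemma iter (A : 'M[F2]_(n + n)) (w : nat) : (w <= n)%N -> pres A -> exists us, size us = (4 * w)%N /\
  pres (apply_rots A us) /\ fixd (apply_rots A us) w.
Proof.
elim: w => [|w IH] hw pA.
  by exists [::]; split => //; split => // k.
have [us [hs [pu fu]]] := IH (ltnW hw) pA.
have [us' [hs' [pu' fu']]] := @step _ (Ordinal hw) pu fu.
exists (us ++ us'); rewrite /apply_rots foldl_cat.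
by split; [rewrite size_cat hs hs' mulnSr | split].
Qed.

End S.
Unset Implicit Arguments.

Lemma pres_symp n (M : 'M[F2]_(n + n)) : is_symp_mx M -> @pres n M.
Proof.
move=> hM v w; rewrite /symp trmx_mul !mulmxA -(mulmxA v M) -(mulmxA v (M *m Jmx n)).
by rewrite (hM : M *m Jmx n *m M^T = Jmx n).
Qed.

Lemma ordP n (k : 'I_(n + n)) : (exists j, k = lshift n j) \/ (exists j, k = rshift n j).
Proof.
case: (splitP k) => j hj; [left|right]; exists j; apply/val_inj => /=; by rewrite hj.
Qed.

Lemma tail_sub n w (x : 'rV[F2]_(n + n)) :
  (forall i : 'I_n, (i < w)%N -> x 0 (lshift n i) = 0 /\ x 0 (rshift n i) = 0) ->
  (x <= tail_span n w)%MS.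
Proof.
move=> h.
suff -> : x = x *m tail_span n w by apply: submxMl.
apply/rowP => k; rewrite mxE (bigD1 k) //= big1 => [|l hl]; last first.
  rewrite !mxE; case: ifP => _; rewrite ?mxE ?(negbTE hl) ?eqxx /= ?mulr0 //.
  by rewrite eq_sym (negbTE hl) /= mulr0.
rewrite addr0 !mxE; case: ifP => hc; first by rewrite mxE !eqxx mulr1.
rewrite mxE mulr0.
have [[j hj]|[j hj]] := @ordP n k; subst k.
  by move: hc; rewrite /= ltn_ord => /negbT; rewrite -ltnNge => /h [].
by move: hc; rewrite /= ltnNge leq_addr /= addKn => /negbT; rewrite -ltnNge => /h [].
Qed.

Theorem lemmaA1 (n : nat) (hn : (1 <= n)%N) (M : 'M[F2]_(n + n))
  (hM : is_symp_mx M) (w : nat) (hw : (w <= n)%N) :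
  exists us : seq 'rV[F2]_(n + n),
    size us = (4 * w)%N /\
    let M' := apply_rots M us in
    (forall i : 'I_n, (i < w)%N ->
       evec i *m M' = evec i /\ fvec i *m M' = fvec i) /\
    (forall j : 'I_n, (w <= j)%N ->
       (evec j *m M' <= tail_span n w)%MS /\ (fvec j *m M' <= tail_span n w)%MS).
Proof.
have [us [hs [pu fu]]] := @iter n M w hw (@pres_symp n M hM).
exists us; split => //; cbv zeta; split; first exact: fu.
move=> j hj.
have ne (i : 'I_n) : (i < w)%N -> (j == i) = false.
  by move=> hi; apply/negbTE; rewrite neq_ltn (leq_trans hi hj) orbT.
split; apply: tail_sub => i hi; have [f1 f2] := fu i hi.
  by rewrite -symp_f -symp_e -{1}f1 -{1}f2 !pu sEE sEF ne.
by rewrite -symp_f -symp_e -{1}f1 -{1}f2 !pu sFF sFE ne.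
Qed.
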